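(* Let a steady perfect fluid flow of class $C^2$ be given on a neighborhood $U$ of a point $p$ in a $(d+1)$-dimensional spacetime, with local chart $(\tau,\lambda,X^i)$ on $U$ as in the context, and let $\gamma:(\sigma_1,\sigma_2)\to U$ be the fluid world line through $p$, parametrized by proper time $\sigma$. On $\Gamma=(\sigma_1,\sigma_2)\times\mathbb R_{>0}$ define $$F(\sigma,n)=h(n,s)^2\,|g_{\tau\tau}(\gamma(\sigma))|\left[1+\left(\frac{\mu}{\sqrt{|g(\gamma(\sigma))|}\,n}\right)^2\right],$$ and let $c:(\sigma_1,\sigma_2)\to\Gamma$, $c(\sigma)=(\sigma,n(\gamma(\sigma)))$. If $p$ is a sonic point, then $p_c:=c(\gamma^{-1}(p))$ satisfies $\partial_nF|_{p_c}=0$ and $\partial_\sigma F|_{p_c}=0$, and $$\mathrm{Hess}:=\big\{(\partial_\sigma^2F)(\partial_n^2F)-(\partial_\sigma\partial_nF)^2\big\}\big|_{p_c}\le0 .$$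
   Context: Perfect fluid: positive functions $n,h,P,s,T$ and $\mathbf u$ ($\mathbf u\cdot\mathbf u=-1$) with $\mathbf dh=T\mathbf ds+n^{-1}\mathbf dP$, $\nabla\cdot(n\mathbf u)=0$, $\nabla\cdot(nh\,\mathbf u\otimes\mathbf u+P\mathbf g^{-1})=0$, equation of state $h=h(P,s)$ (equivalently $h=h(n,s)$), speed of sound $v_{\rm s}^2=(\partial\ln h/\partial\ln n)_s\in(0,1)$. Steady w.r.t. a timelike Killing field $\boldsymbol\xi$ on $U$: $\mathcal L_{\boldsymbol\xi}P=\mathcal L_{\boldsymbol\xi}s=0$, $\mathcal L_{\boldsymbol\xi}\mathbf u=0$. With $\bar{\boldsymbol\xi}=\boldsymbol\xi/\sqrt{|\boldsymbol\xi\cdot\boldsymbol\xi|}$, $\mathbf u=(1-v^2)^{-1/2}(\bar{\boldsymbol\xi}+v\bar{\boldsymbol\eta})$, $v\in[0,1)$, $\bar{\boldsymbol\eta}$ unit spacelike orthogonal to $\bar{\boldsymbol\xi}$, $\mathcal L_{\boldsymbol\xi}\bar{\boldsymbol\eta}=0$; sonic point: $v=v_{\rm s}$. Chart: coordinates $(\tau,\lambda,X^i)$ on $U$ with $\boldsymbol\xi=\boldsymbol\partial_\tau$, $\bar{\boldsymbol\eta}=\boldsymbol\partial_\lambda$ (so $g_{\lambda\lambda}=1$), the $X^i$ constant on the leaves spanned by $\boldsymbol\xi,\bar{\boldsymbol\eta}$; $g$ denotes $\det(g_{\mu\nu})$ in this chart. Along $\gamma$ (which lies in one leaf), $s$ is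 constant and $\mu:=\sqrt{|g|}\,n\,u^\lambda$ is constant, where $u^\lambda=d\lambda/d\sigma$. *)

(* Defs.v *)
From HB Require Import structures.
From mathcomp Require Import all_boot all_order all_algebra.
From mathcomp Require Import all_classical all_reals all_analysis.
Set Implicit Arguments. Unset Strict Implicit. Unset Printing Implicit Defensive.
Import Order.TTheory GRing.Theory Num.Theory.
Import numFieldNormedType.Exports.
Local Open Scope classical_set_scope.
Local Open Scope ring_scope.

Section Defs.
Variable R : realType.
Variable k : nat.
(* spacetime dimension d+1 = k.+2, coordinates (x^0,...,x^(k+1)) = (tau, lambda, X^i) *)
Notation D := k.+2.
Notation pt := 'rV[R]_D.

Definition tau_i : 'I_D := ord0.
Definition lam_i : 'I_D := lift ord0 ord0.

Definition evec (m : 'I_D) : 'rV[R]_D := delta_mx 0 m.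

Definition pd (m : 'I_D) (f : pt -> R) (x : pt) : R :=
  derive1 (fun t : R => f (x + t *: evec m)) 0.

Definition C1_on (U : set pt) (f : pt -> R) : Prop :=
  {within U, continuous f} /\
  forall m, (forall x, U x -> derivable (fun t : R => f (x + t *: evec m)) 0 1) /\
            {within U, continuous (pd m f)}.

Definition C2_on (U : set pt) (f : pt -> R) : Prop :=
  C1_on U f /\ forall m, C1_on U (pd m f).

Definition C2_on_R (I : set R) (f : R -> R) : Prop :=
  (forall x, I x -> derivable f x 1 /\ derivable (derive1 f) x 1) /\
  {within I, continuous (derive1n 2 f)}.

Definition minkowski : 'M[R]_D :=
  diag_mx (\row_(i < D) (if i == tau_i then -1 else 1)).

Definition lorentzian (G : 'M[R]_D) : Prop :=
  G^T = G /\ exists A : 'M[R]_D, A \in unitmx /\ A^T *m G *m A = minkowski.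

Definition gdot (g : pt -> 'M[R]_D) (x : pt) (X Y : 'rV[R]_D) : R :=
  \sum_(a < D) \sum_(b < D) g x a b * X 0 a * Y 0 b.

Definition christoffel (g : pt -> 'M[R]_D) (a b c : 'I_D) (x : pt) : R :=
  2^-1 * \sum_(e < D) (invmx (g x)) a e *
    (pd b (fun y => g y e c) x + pd c (fun y => g y e b) x - pd e (fun y => g y b c) x).

Definition div_vec (g : pt -> 'M[R]_D) (V : pt -> 'rV[R]_D) (x : pt) : R :=
  \sum_(m < D) pd m (fun y => V y 0 m) x +
  \sum_(m < D) \sum_(l < D) christoffel g m m l x * V x 0 l.

Definition div_tens (g : pt -> 'M[R]_D) (T : pt -> 'M[R]_D) (nu : 'I_D) (x : pt) : R :=
  \sum_(m < D) pd m (fun y => T y m nu) x +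
  \sum_(m < D) \sum_(l < D) christoffel g m m l x * T x l nu +
  \sum_(m < D) \sum_(l < D) christoffel g nu m l x * T x m l.

Definition xi : pt -> 'rV[R]_D := fun _ => evec tau_i.
Definition etabar : pt -> 'rV[R]_D := fun _ => evec lam_i.

Definition lie_fun (X : pt -> 'rV[R]_D) (f : pt -> R) (x : pt) : R :=
  \sum_(a < D) X x 0 a * pd a f x.

Definition lie_vec (X V : pt -> 'rV[R]_D) (x : pt) : 'rV[R]_D :=
  \row_(m < D) \sum_(a < D)
     (X x 0 a * pd a (fun y => V y 0 m) x - V x 0 a * pd a (fun y => X y 0 m) x).

Definition lie_met (X : pt -> 'rV[R]_D) (g : pt -> 'M[R]_D) (x : pt) : 'M[R]_D :=
  \matrix_(m < D, n < D) \sum_(a < D)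
     (X x 0 a * pd a (fun y => g y m n) x + g x a n * pd m (fun y => X y 0 a) x
      + g x m a * pd n (fun y => X y 0 a) x).

Definition stress (g : pt -> 'M[R]_D) (n h P : pt -> R) (u : pt -> 'rV[R]_D)
  (x : pt) : 'M[R]_D :=
  (n x * h x) *: ((u x)^T *m u x) + P x *: invmx (g x).

(* squared speed of sound (d ln h / d ln n)_s for the equation of state h = Hn(n,s) *)
Definition sound2 (Hn : R -> R -> R) (m s0 : R) : R :=
  m * derive1 (fun m' => Hn m' s0) m / Hn m s0.

Definition mu_of (g : pt -> 'M[R]_D) (n : pt -> R) (u : pt -> 'rV[R]_D) (x : pt) : R :=
  Num.sqrt `|\det (g x)| * n x * u x 0 lam_i.

Definition Ffun (g : pt -> 'M[R]_D) (gam : R -> pt) (Hn : R -> R -> R) (s0 mu : R)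
  (sig m : R) : R :=
  Hn m s0 ^+ 2 * `|g (gam sig) tau_i tau_i| *
  (1 + (mu / (Num.sqrt `|\det (g (gam sig))| * m)) ^+ 2).

End Defs.

Definition dsig {R : realType} (F : R -> R -> R) (a b : R) : R :=
  derive1 (fun x => F x b) a.
Definition dn {R : realType} (F : R -> R -> R) (a b : R) : R :=
  derive1 (fun y => F a y) b.
Definition hessian_det {R : realType} (F : R -> R -> R) (a b : R) : R :=
  derive1 (fun x => dsig F x b) a * derive1 (fun y => dn F a y) b
  - (derive1 (fun x => dn F x b) a) ^+ 2.
Arguments tau_i {k}.
Arguments lam_i {k}.
Arguments evec {R k}.
Arguments xi {R k}.
Arguments etabar {R k}.
Arguments minkowski {R k}.

(* Main.v *)
Require Import Defs.
From HB Require Import structures.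
From mathcomp Require Import all_boot all_order all_algebra.
From mathcomp Require Import all_classical all_reals all_analysis.
Import Order.TTheory GRing.Theory Num.Theory.
Import numFieldNormedType.Exports.
Local Open Scope classical_set_scope.
Local Open Scope ring_scope.
From mathcomp Require Import ring lra.
Set Implicit Arguments. Unset Strict Implicit. Unset Printing Implicit Defensive.

Section CR.
Variable R : realType.

Lemma derivable_shift (F : R -> R) (t1 : R) :
  derivable F t1 1 = derivable (fun h => F (h + t1)) 0 1.
Proof.
rewrite /derivable /=.
by under [in RHS]eq_fun do rewrite addr0 add0r.
Qed.

Lemma derive1_shift (F : R -> R) (t1 : R) :
  derive1 F t1 = derive1 (fun h => F (h + t1)) 0.
Proof.
rewrite /derive1 /=.
by under [in RHS]eq_fun do rewrite addr0 add0r.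
Qed.

Lemma is_derive1_lin (c : R) (t : R) : is_derive t 1 (fun s : R => c * s) c.
Proof.
have := @is_deriveZ R R R (@id R) c t 1 1 (is_derive_id _ _).
rewrite /GRing.scale /= mulr1.
move=> H. exact: H.
Qed.

Variable k : nat.
Local Notation D := k.+2.
Local Notation pt := 'rV[R]_D.

Definition line (f : pt -> R) (y : pt) (m : 'I_D) := fun t : R => f (y + t *: evec m).

Lemma line_shift f y m t1 :
  (fun h => line f y m (h + t1)) = line f (y + t1 *: evec m) m.
Proof.
by apply/funext => h; rewrite /line scalerDl [h *: _ + _]addrC addrA.
Qed.

Lemma line_is_derive f y m t :
  derivable (line f (y + t *: evec m) m) 0 1 ->
  is_derive t 1 (line f y m) (pd m f (y + t *: evec m)).
Proof.
move=> d.
have D1 : derivable (line f y m) t 1 by rewrite derivable_shift line_shift.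
apply: DeriveDef => //.
by rewrite -derive1E derive1_shift line_shift.
Qed.

Lemma seg_bound (f : pt -> R) (m : 'I_D) (y : pt) (c c0 eps : R) :
  (forall t, `|t| <= `|c| ->
     derivable (line f (y + t *: evec m) m) 0 1 /\
     `|pd m f (y + t *: evec m) - c0| <= eps) ->
  `|f (y + c *: evec m) - f y - c0 * c| <= eps * `|c|.
Proof.
move=> H.
pose phi : R -> R := line f y m - (fun s => c0 * s).
have dphi : forall t : R, `|t| <= `|c| ->
    is_derive t 1 phi (pd m f (y + t *: evec m) - c0).
  move=> t /H [d _]; rewrite /phi.
  apply: is_deriveB; first exact: line_is_derive.
  exact: is_derive1_lin.
have bphi : forall t : R, `|t| <= `|c| -> `|pd m f (y + t *: evec m) - c0| <= eps.
  by move=> t /H [].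
have -> : f (y + c *: evec m) - f y - c0 * c = phi c - phi 0.
  by rewrite /phi !fctE /line scale0r addr0 mulr0 subr0 addrAC.
have [hc|hc] := leP 0 c.
- have := @MVT_segment R phi (fun t => pd m f (y + t *: evec m) - c0) 0 c hc.
  case.
  + move=> x; rewrite in_itv /= => /andP[x0 xc]; apply: dphi.
    by rewrite ger0_norm ?ltW // ger0_norm // ltW.
  + apply: derivable_within_continuous => x; rewrite in_itv /= => /andP[x0 xc].
    have /dphi [] // : `|x| <= `|c| by rewrite ger0_norm // ger0_norm.
  + move=> xi; rewrite in_itv /= => /andP[x0 xc] ->.
    rewrite subr0 normrM ler_wpM2r //; apply: bphi.
    by rewrite ger0_norm // ger0_norm.
- have hc' : c <= 0 by apply: ltW.
  have := @MVT_segment R phi (fun t => pd m f (y + t *: evec m) - c0) c 0 hc'.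
  case.
  + move=> x; rewrite in_itv /= => /andP[x0 xc]; apply: dphi.
    by rewrite ltr0_norm // ltr0_norm // lerN2 ltW.
  + apply: derivable_within_continuous => x; rewrite in_itv /= => /andP[x0 xc].
    have /dphi [] // : `|x| <= `|c|.
      by rewrite ler0_norm // ler0_norm // lerN2.
  + move=> xi; rewrite in_itv /= => /andP[x0 xc] E.
    rewrite distrC E sub0r normrM normrN ler_wpM2r //; apply: bphi.
    by rewrite ler0_norm // ler0_norm // lerN2.
Qed.


Lemma evecE (m : 'I_D) (i : 'I_1) (j : 'I_D) : (evec m : 'rV[R]_D) i j = (j == m)%:R.
Proof. by rewrite /evec mxE; case: i => [[]] //. Qed.

Lemma box_bound (f : pt -> R) (x : pt) (r eps : R) :
  (forall y : pt, (forall i, `|y 0 i - x 0 i| < r) ->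
     (forall m, derivable (line f y m) 0 1) /\
     (forall m, `|pd m f y - pd m f x| <= eps)) ->
  forall z : pt, (forall i, `|z 0 i - x 0 i| < r) ->
  `|f z - f x - \sum_(m < D) pd m f x * (z 0 m - x 0 m)|
     <= eps * \sum_(m < D) `|z 0 m - x 0 m|.
Proof.
move=> HB z Hz.
pose d (i : 'I_D) := z 0 i - x 0 i.
pose Y (j : nat) : pt := x + \row_(i < D) (if (i < j)%N then d i else 0).
have Y0 : Y 0%N = x.
  by apply/matrixP => a b; rewrite /Y !mxE /= addr0.
have YD : Y D = z.
  apply/matrixP => a b; rewrite /Y !mxE ltn_ord /d.
  by rewrite (ord1 a) addrC subrK.
have YS : forall j : 'I_D, Y j.+1 = Y j + d j *: evec j.
  move=> j; apply/matrixP => a b; rewrite /Y !mxE (ord1 a) eqxx /=.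
  rewrite -addrA; congr (_ + _).
  case: (ltngtP b j) => H.
  - rewrite ltnS ltnW //.
    have /negbTE -> : b != j by rewrite -val_eqE /= neq_ltn H.
    by rewrite mulr0 addr0.
  - rewrite ltnS leqNgt H /=.
    have /negbTE -> : b != j by rewrite -val_eqE /= neq_ltn H orbT.
    by rewrite mulr0 addr0.
  - have -> : b = j by apply/val_inj.
    by rewrite ltnSn eqxx mulr1 add0r.
have tele : f z - f x = \sum_(j < D) (f (Y j.+1) - f (Y j)).
  rewrite -YD -Y0 -(telescope_sumr (fun j => f (Y j)) (leq0n D)).
  by rewrite big_mkord.
rewrite tele -sumrB mulr_sumr.
apply: (le_trans (ler_norm_sum _ _ _)); apply: ler_sum => j _.
rewrite YS; apply: seg_bound => t Ht.
have Hbox : forall i, `|(Y j + t *: evec j) 0 i - x 0 i| < r.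
  move=> i; rewrite /Y !mxE eqxx /=.
  have -> : forall a b c : R, a + b + c - a = b + c by move=> *; ring.
  case: (ltngtP i j) => H.
  - have /negbTE -> : i != j by rewrite -val_eqE /= neq_ltn H.
    by rewrite mulr0 addr0; apply: Hz.
  - have /negbTE -> : i != j by rewrite -val_eqE /= neq_ltn H orbT.
    by rewrite mulr0 addr0 normr0; apply: le_lt_trans (Hz i).
  - have -> : i = j by apply/val_inj.
    by rewrite ?ltnn eqxx mulr1 add0r; apply: le_lt_trans Ht (Hz j).
have [H1 H2] := HB _ Hbox.
by split; [apply: H1 | apply: H2].
Qed.


Lemma cvg_bigsum (I : Type) (r : seq I) (F : I -> R -> R) (l : I -> R) :
  (forall i, F i h @[h --> 0^'] --> l i) ->
  (\sum_(i <- r) F i h) @[h --> (0:R)^'] --> \sum_(i <- r) l i.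
Proof.
move=> H; elim: r => [|i r IH].
  rewrite big_nil; under eq_fun do rewrite big_nil; exact: cvg_cst.
rewrite big_cons; under eq_fun do rewrite big_cons.
exact: cvgD.
Qed.

Lemma chain_rule (f : pt -> R) (U : set pt) (gam : R -> pt) (t0 : R) (w : pt) :
  open U -> U (gam t0) ->
  (forall y, U y -> forall m, derivable (line f y m) 0 1) ->
  (forall m, {within U, continuous (pd m f)}) ->
  is_derive t0 1 gam w ->
  is_derive t0 1 (f \o gam) (\sum_(m < D) pd m f (gam t0) * w 0 m).
Proof.
move=> oU Ux Hd Hc [dg vg].
set x := gam t0.
pose Q (m : 'I_D) (h : R) := h^-1 * (gam (h + t0) 0 m - x 0 m).
have HQ : forall m, Q m h @[h --> 0^'] --> w 0 m.
  move=> m.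
  have /derivable_mxP /(_ 0 m) dm := dg.
  have := derive_mx dg; rewrite vg => /(congr1 (fun M : pt => M 0 m)); rewrite mxE => ->.
  have -> : Q m = (fun h => h^-1 *: ((fun t => gam t 0 m) \o shift t0) (h *: 1)
                   - h^-1 *: gam t0 0 m).
    by apply/funext => h; rewrite /Q /= [h *: 1]mulr1 mulrBr.
  have := dm; rewrite /derivable => /cvg_ex [l Hl].
  rewrite /derive (cvg_lim _ Hl) //.
  by apply: cvg_trans Hl; apply: near_eq_cvg; near=> h; rewrite /= scalerBr.
pose A (h : R) := h^-1 * (f (gam (h + t0)) - f x
                   - \sum_(m < D) pd m f x * (gam (h + t0) 0 m - x 0 m)).
have HA : A h @[h --> 0^'] --> (0:R).
  apply/cvgrPdist_le => e e0.
  pose W := \sum_(m < D) (`|w 0 m| + 1).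
  have W0 : 0 < W.
    rewrite /W big_ord_recl; apply: ltr_pwDl; first by rewrite ltr_wpDl.
    by apply: sumr_ge0 => i _; apply: addr_ge0.
  pose eps := e / W.
  have eps0 : 0 < eps by apply: divr_gt0.
  have NS : \forall y \near x, U y /\ forall m, `|pd m f x - pd m f y| <= eps.
    have nU : nbhs x U by apply: open_nbhs_nbhs; split.
    near=> y; split; first by near: y.
    near: y; apply: filter_forall => m.
    have : {in U, continuous (pd m f)} by rewrite -continuous_open_subspace.
    move=> /(_ x); rewrite inE => /(_ Ux) /cvgrPdist_le /(_ eps eps0).
    by [].
  move/nbhs_ballP: NS => [r r0 Hr].
  have Hbox : forall y : pt, (forall i, `|y 0 i - x 0 i| < r) ->
      (forall m, derivable (line f y m) 0 1) /\
      (forall m, `|pd m f y - pd m f x| <= eps).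
    move=> y Hy.
    have By : ball x r y.
      rewrite -ball_normE /ball_ /= [`|_|]/Num.Def.normr /= mx_normrE.
      apply: bigmax_lt => //= -[a b] _ /=.
      by rewrite (ord1 a) !mxE distrC; apply: Hy.
    have [Uy Hy2] := Hr _ By.
    by split; [apply: Hd | move=> m; rewrite distrC].
  have HQ1 : \forall h \near (0:R)^', forall m, `|Q m h - w 0 m| <= 1.
    apply: filter_forall => m.
    move/cvgrPdist_le: (HQ m) => /(_ 1 ltr01).
    by apply: filter_app; near=> h => H; rewrite distrC.
  near=> h.
  have hn0 : h != 0 by near: h; exact: nbhs_dnbhs_neq.
  have hr : `|h| < r / W by near: h; apply: dnbhs0_lt; apply: divr_gt0.
  have HQh : forall m, `|Q m h - w 0 m| <= 1 by near: h.
  have QW : \sum_(m < D) `|Q m h| <= W.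
    apply: ler_sum => m _.
    have := HQh m; rewrite -(subrK (w 0 m) (Q m h)) => H.
    by apply: (le_trans (ler_normD _ _)); rewrite addrC lerD2l.
  have Delta : forall m, gam (h + t0) 0 m - x 0 m = h * Q m h.
    by move=> m; rewrite /Q mulrA mulfV // mul1r.
  have Hz : forall i, `|gam (h + t0) 0 i - x 0 i| < r.
    move=> i; rewrite Delta normrM.
    have : `|Q i h| <= W.
      apply: le_trans QW.
      rewrite (bigD1 i) //= lerDl; by apply: sumr_ge0.
    move=> QiW.
    have := hr; rewrite ltr_pdivlMr // => hr'.
    apply: le_lt_trans hr'.
    by apply: ler_wpM2l.
  have := @box_bound f x r eps Hbox _ Hz => BB.
  rewrite sub0r normrN /A normrM.
  apply: (le_trans (ler_wpM2l _ BB)) => //.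
  under eq_bigr do rewrite Delta normrM.
  rewrite -mulr_sumr normfV mulrCA mulKf ?normr_eq0 //.
  apply: (le_trans (ler_wpM2l _ QW)); first exact: ltW.
  by rewrite /eps divfK // gt_eqF.
have HB : (\sum_(m < D) pd m f x * Q m h) @[h --> 0^'] --> \sum_(m < D) pd m f x * w 0 m.
  apply: cvg_bigsum => m; apply: cvgMr; exact: HQ.
have Hq : (fun h : R => h^-1 *: (((f \o gam) \o shift t0) (h *: 1) - (f \o gam) t0))
          @ (0:R)^' --> \sum_(m < D) pd m f x * w 0 m.
  rewrite -[X in _ --> X]add0r.
  apply: cvg_trans (cvgD HA HB).
  apply: near_eq_cvg; near=> h => /=.
  rewrite !fctE /A /Q [h *: 1]mulr1.
  have -> : \sum_(m < D) pd m f x * (h^-1 * (gam (h + t0) 0 m - x 0 m)) =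
     h^-1 * \sum_(m < D) pd m f x * (gam (h + t0) 0 m - x 0 m).
    by rewrite mulr_sumr; apply: eq_bigr => m _; rewrite mulrCA.
  by rewrite -mulrDr subrK.
apply: DeriveDef; first by apply/cvg_ex; exists (\sum_(m < D) pd m f x * w 0 m).
by rewrite /derive; apply: cvg_lim Hq.
Unshelve. all: by end_near.
Qed.

End CR.

Section Core.
Variable R : fieldType.
Variable D : nat.
Implicit Types (a b : 'I_D).

Lemma sum_delta (a : 'I_D) (X : 'I_D -> R) : \sum_(e < D) (a == e)%:R * X e = X a.
Proof.
rewrite (bigD1 a) //= eqxx mul1r big1 ?addr0 // => e /negbTE.
by rewrite eq_sym => ->; rewrite mul0r.
Qed.

Lemma sum_delta' (a : 'I_D) (X : 'I_D -> R) : \sum_(e < D) X e * (e == a)%:R = X a.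
Proof.
rewrite -[RHS](sum_delta a X); apply: eq_bigr => e _; by rewrite mulrC eq_sym.
Qed.

Lemma sum_swap (F : 'I_D -> 'I_D -> R) :
  \sum_(m < D) \sum_(l < D) F m l = \sum_(m < D) \sum_(l < D) F l m.
Proof. by rewrite exchange_big. Qed.

Variables (tau : 'I_D) (G Gi : 'I_D -> 'I_D -> R) (dG dGi : 'I_D -> 'I_D -> 'I_D -> R)
  (u : 'I_D -> R) (du : 'I_D -> 'I_D -> R) (n h P : R) (dn dh dP : 'I_D -> R).

Definition Gam a b c := 2^-1 * \sum_(e < D) Gi a e * (dG b e c + dG c e b - dG e b c).
Definition Tm a b := n * h * (u a * u b) + P * Gi a b.
Definition dTm m b := (dn m * h + n * dh m) * (u m * u b)
   + n * h * (du m m * u b + u m * du m b) + (dP m * Gi m b + P * dGi m m b).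

Hypotheses (HG : forall a b, G a b = G b a) (HGi : forall a b, Gi a b = Gi b a)
  (HdG : forall m a b, dG m a b = dG m b a)
  (HGGi : forall a b, \sum_(c < D) G a c * Gi c b = (a == b)%:R)
  (HdGi : forall m a b, \sum_(c < D) (dGi m a c * G c b + Gi a c * dG m c b) = 0)
  (Hkill : forall a b, dG tau a b = 0) (HdP : dP tau = 0)
  (H2 : (2 : R) != 0).

Lemma GGi' e : \sum_(v < D) G tau v * Gi e v = (tau == e)%:R.
Proof. by rewrite -HGGi; apply: eq_bigr => v _; rewrite HGi. Qed.

Lemma lowGam m l : \sum_(v < D) G tau v * Gam v m l = 2^-1 * (dG m tau l + dG l tau m).
Proof.
rewrite /Gam.
under eq_bigr do rewrite mulrCA mulr_sumr.
rewrite -mulr_sumr exchange_big /=.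
congr (_ * _).
have -> : dG m tau l + dG l tau m = dG m tau l + dG l tau m - dG tau m l.
  by rewrite Hkill subr0.
rewrite -(sum_delta tau (fun j => dG m j l + dG l j m - dG j m l)).
apply: eq_bigr => j _.
rewrite -HGGi mulr_suml; apply: eq_bigr => i _; by rewrite mulrA.
Qed.


Lemma halfsym (Y : 'I_D -> 'I_D -> R) : (forall m l, Y m l = Y l m) ->
  \sum_(m < D) \sum_(l < D) 2^-1 * (dG m tau l + dG l tau m) * Y m l
  = \sum_(m < D) \sum_(l < D) dG m tau l * Y m l.
Proof.
move=> HY.
transitivity (2^-1 * (\sum_(m < D) \sum_(l < D) dG m tau l * Y m l
                    + \sum_(m < D) \sum_(l < D) dG l tau m * Y m l)).
  rewrite -big_split mulr_sumr; apply: eq_bigr => m _.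
  rewrite -big_split mulr_sumr; apply: eq_bigr => l _ /=; ring.
rewrite (sum_swap (fun m l => dG l tau m * Y m l)) /=.
under [X in _ + X]eq_bigr do under eq_bigr do rewrite HY.
by field.
Qed.


Lemma contract3 (a : 'I_D -> R) (B : 'I_D -> 'I_D -> 'I_D -> R) :
  \sum_(v < D) a v * \sum_(m < D) \sum_(l < D) B v m l
  = \sum_(m < D) \sum_(l < D) \sum_(v < D) a v * B v m l.
Proof.
under eq_bigr do rewrite mulr_sumr.
under eq_bigr do under eq_bigr do rewrite mulr_sumr.
rewrite exchange_big; apply: eq_bigr => m _ /=; by rewrite exchange_big.
Qed.

Lemma contract2 (a : 'I_D -> R) (B : 'I_D -> 'I_D -> R) :
  \sum_(v < D) a v * \sum_(m < D) B v m = \sum_(m < D) \sum_(v < D) a v * B v m.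
Proof.
under eq_bigr do rewrite mulr_sumr.
by rewrite exchange_big.
Qed.

Lemma X2E : \sum_(v < D) G tau v * \sum_(m < D) \sum_(l < D) Gam v m l * (u m * u l)
  = \sum_(v < D) (\sum_(m < D) dG m tau v * u m) * u v.
Proof.
rewrite contract3.
transitivity (\sum_(m < D) \sum_(l < D) 2^-1 * (dG m tau l + dG l tau m) * (u m * u l)).
  apply: eq_bigr => m _; apply: eq_bigr => l _.
  rewrite -lowGam mulr_suml; apply: eq_bigr => v _; by rewrite mulrA.
rewrite halfsym; last by move=> m l; rewrite mulrC.
rewrite exchange_big /=; apply: eq_bigr => v _; rewrite mulr_suml.
by apply: eq_bigr => m _; rewrite mulrA.
Qed.

Lemma sumGam0 : \sum_(m < D) Gam m m tau = 0.
Proof.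
rewrite /Gam -mulr_sumr.
under eq_bigr do under eq_bigr do rewrite Hkill addr0 mulrBr.
under eq_bigr do rewrite sumrB.
rewrite sumrB.
rewrite (sum_swap (fun m e => Gi m e * dG e m tau)) /=.
under [X in _ - X]eq_bigr do under eq_bigr do rewrite HGi.
by rewrite subrr mulr0.
Qed.

Lemma X3E : \sum_(v < D) G tau v * (\sum_(m < D) dP m * Gi m v + P * \sum_(m < D) dGi m m v
     + P * \sum_(m < D) \sum_(l < D) Gam m m l * Gi l v
     + P * \sum_(m < D) \sum_(l < D) Gam v m l * Gi m l) = 0.
Proof.
have Ea : \sum_(v < D) G tau v * \sum_(m < D) dP m * Gi m v = 0.
  rewrite contract2.
  under eq_bigr do (under eq_bigr do rewrite mulrCA; rewrite -mulr_sumr GGi').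
  by under eq_bigr do rewrite mulrC; rewrite sum_delta HdP.
have Eb : \sum_(v < D) G tau v * \sum_(m < D) dGi m m v
          = - \sum_(m < D) \sum_(v < D) Gi m v * dG m v tau.
  rewrite contract2 -sumrN; apply: eq_bigr => m _.
  transitivity (\sum_(c < D) dGi m m c * G c tau).
    by apply: eq_bigr => v _; rewrite mulrC HG.
  apply/eqP; rewrite -addr_eq0 -big_split /=; apply/eqP; exact: HdGi.
have Ec : \sum_(v < D) G tau v * \sum_(m < D) \sum_(l < D) Gam m m l * Gi l v = 0.
  rewrite contract3; transitivity (\sum_(m < D) Gam m m tau); last exact: sumGam0.
  apply: eq_bigr => m _.
  under eq_bigr do (under eq_bigr do rewrite mulrCA; rewrite -mulr_sumr GGi').
  by under eq_bigr do rewrite mulrC; rewrite sum_delta.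
have Ed : \sum_(v < D) G tau v * \sum_(m < D) \sum_(l < D) Gam v m l * Gi m l
          = \sum_(m < D) \sum_(v < D) Gi m v * dG m v tau.
  rewrite contract3.
  transitivity (\sum_(m < D) \sum_(l < D) 2^-1 * (dG m tau l + dG l tau m) * Gi m l).
    apply: eq_bigr => m _; apply: eq_bigr => l _.
    rewrite -lowGam mulr_suml; apply: eq_bigr => v _; by rewrite mulrA.
  rewrite halfsym; last by move=> m l; rewrite HGi.
  by apply: eq_bigr => m _; apply: eq_bigr => v _; rewrite mulrC HdG.
transitivity (\sum_(v < D) G tau v * \sum_(m < D) dP m * Gi m v
   + P * \sum_(v < D) G tau v * \sum_(m < D) dGi m m v
   + P * \sum_(v < D) G tau v * \sum_(m < D) \sum_(l < D) Gam m m l * Gi l v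
   + P * \sum_(v < D) G tau v * \sum_(m < D) \sum_(l < D) Gam v m l * Gi m l).
  rewrite !mulr_sumr -!big_split; apply: eq_bigr => v _ /=; ring.
rewrite Ea Eb Ec Ed; ring.
Qed.


Lemma bernoulli_core :
  \sum_(m < D) (dn m * u m + n * du m m) + \sum_(m < D) \sum_(l < D) Gam m m l * (n * u l) = 0 ->
  (forall v, \sum_(m < D) dTm m v + \sum_(m < D) \sum_(l < D) Gam m m l * Tm l v
             + \sum_(m < D) \sum_(l < D) Gam v m l * Tm m l = 0) ->
  n != 0 ->
  (\sum_(m < D) dh m * u m) * (\sum_(v < D) G tau v * u v)
  + h * \sum_(v < D) ((\sum_(m < D) dG m tau v * u m) * u v
                      + G tau v * (\sum_(m < D) du m v * u m)) = 0.
Proof.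
move=> Hc He Hn.
have E1 : forall v, \sum_(m < D) dTm m v + \sum_(m < D) \sum_(l < D) Gam m m l * Tm l v
             + \sum_(m < D) \sum_(l < D) Gam v m l * Tm m l
   = h * u v * (\sum_(m < D) (dn m * u m + n * du m m) + \sum_(m < D) \sum_(l < D) Gam m m l * (n * u l))
     + n * (u v * (\sum_(m < D) dh m * u m) + h * (\sum_(m < D) du m v * u m)
            + h * (\sum_(m < D) \sum_(l < D) Gam v m l * (u m * u l)))
     + (\sum_(m < D) dP m * Gi m v + P * \sum_(m < D) dGi m m v
     + P * \sum_(m < D) \sum_(l < D) Gam m m l * Gi l v
     + P * \sum_(m < D) \sum_(l < D) Gam v m l * Gi m l).
  move=> v.
  have Ei : \sum_(m < D) dTm m v = h * u v * (\sum_(m < D) (dn m * u m + n * du m m))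
      + n * (u v * (\sum_(m < D) dh m * u m)) + n * h * (\sum_(m < D) du m v * u m)
      + (\sum_(m < D) dP m * Gi m v + P * \sum_(m < D) dGi m m v).
    rewrite !mulr_sumr -!big_split; apply: eq_bigr => m _ /=; rewrite /dTm; ring.
  have Eii : \sum_(m < D) \sum_(l < D) Gam m m l * Tm l v
      = h * u v * (\sum_(m < D) \sum_(l < D) Gam m m l * (n * u l))
        + P * \sum_(m < D) \sum_(l < D) Gam m m l * Gi l v.
    rewrite !mulr_sumr -!big_split; apply: eq_bigr => m _ /=.
    rewrite !mulr_sumr -!big_split; apply: eq_bigr => l _ /=; rewrite /Tm; ring.
  have Eiii : \sum_(m < D) \sum_(l < D) Gam v m l * Tm m l
      = n * h * (\sum_(m < D) \sum_(l < D) Gam v m l * (u m * u l))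
        + P * \sum_(m < D) \sum_(l < D) Gam v m l * Gi m l.
    rewrite !mulr_sumr -!big_split; apply: eq_bigr => m _ /=.
    rewrite !mulr_sumr -!big_split; apply: eq_bigr => l _ /=; rewrite /Tm; ring.
  rewrite Ei Eii Eiii; ring.
have gen : forall (C Sdh : R) (A1 A2 A3 : 'I_D -> R),
   \sum_(v < D) G tau v * (h * u v * C + n * (u v * Sdh + h * A1 v + h * A2 v) + A3 v)
   = h * C * (\sum_(v < D) G tau v * u v)
     + n * (Sdh * (\sum_(v < D) G tau v * u v) + h * (\sum_(v < D) G tau v * A1 v)
            + h * (\sum_(v < D) G tau v * A2 v)) + \sum_(v < D) G tau v * A3 v.
  move=> C Sdh A1 A2 A3.
  rewrite !mulr_sumr -!big_split /= !mulr_sumr -!big_split /=.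
  by apply: eq_bigr => v _; ring.
have Z : \sum_(v < D) G tau v * (\sum_(m < D) dTm m v + \sum_(m < D) \sum_(l < D) Gam m m l * Tm l v
             + \sum_(m < D) \sum_(l < D) Gam v m l * Tm m l) = 0.
  by rewrite big1 // => v _; rewrite He mulr0.
move: Z; under eq_bigr => v _ do rewrite E1.
rewrite gen Hc X3E X2E mulr0 mul0r add0r addr0.
move/eqP; rewrite mulf_eq0 (negbTE Hn) /= => /eqP Z.
rewrite -[RHS]Z big_split /= mulrDr; ring.
Qed.

End Core.

Section LD.
Variable R : realType.
Variable k : nat.
Local Notation D := k.+2.
Local Notation pt := 'rV[R]_D.
Implicit Types (f g : pt -> R) (x : pt) (m : 'I_D).

Definition ld m f x := derivable (line f x m) (0:R) 1.

Lemma lineE f x m : line f x m 0 = f x.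
Proof. by rewrite /line scale0r addr0. Qed.

Lemma ld_is_derive f x m : ld m f x -> is_derive (0:R) 1 (line f x m) (pd m f x).
Proof. by move=> H; rewrite /pd derive1E; apply: derivableP. Qed.

Lemma is_derive_pd f x m d : is_derive (0:R) 1 (line f x m) d -> ld m f x /\ pd m f x = d.
Proof. by move=> [H1 H2]; split => //; rewrite /pd derive1E. Qed.

Lemma LD_mul f g x m df dg :
  is_derive (0:R) 1 (line f x m) df -> is_derive (0:R) 1 (line g x m) dg ->
  is_derive (0:R) 1 (line (fun y => f y * g y) x m) (f x * dg + g x * df).
Proof.
move=> Hf Hg.
have -> : line (fun y => f y * g y) x m = line f x m * line g x m by [].
by have H := is_deriveM Hf Hg; rewrite !lineE in H; exact: H.
Qed.

Lemma LD_add f g x m df dg :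
  is_derive (0:R) 1 (line f x m) df -> is_derive (0:R) 1 (line g x m) dg ->
  is_derive (0:R) 1 (line (fun y => f y + g y) x m) (df + dg).
Proof.
move=> Hf Hg.
have -> : line (fun y => f y + g y) x m = line f x m + line g x m by [].
exact: is_deriveD.
Qed.

Lemma LD_opp f x m df :
  is_derive (0:R) 1 (line f x m) df ->
  is_derive (0:R) 1 (line (fun y => - f y) x m) (- df).
Proof.
move=> Hf.
have -> : line (fun y => - f y) x m = - line f x m by [].
exact: is_deriveN.
Qed.

Lemma LD_cst (c : R) x m : is_derive (0:R) 1 (line (fun _ => c) x m) 0.
Proof.
have -> : line (fun _ => c) x m = cst c by [].
exact: is_derive_cst.
Qed.

Lemma LD_sum (n : nat) (F : 'I_n -> pt -> R) (dF : 'I_n -> R) x m :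
  (forall i, is_derive (0:R) 1 (line (F i) x m) (dF i)) ->
  is_derive (0:R) 1 (line (fun y => \sum_(i < n) F i y) x m) (\sum_(i < n) dF i).
Proof.
move=> H.
have -> : line (fun y => \sum_(i < n) F i y) x m = \sum_(i < n) line (F i) x m.
  by apply/funext => t; rewrite /line fct_sumE.
exact: is_derive_sum.
Qed.

Lemma LD_ext f g x m d :
  (forall y, f y = g y) -> is_derive (0:R) 1 (line f x m) d -> is_derive (0:R) 1 (line g x m) d.
Proof. by move=> /funext ->. Qed.

Lemma near_line (U : set pt) x m : open U -> U x ->
  \forall t \near (0:R), U (x + t *: evec m).
Proof.
move=> oU Ux.
have nU : nbhs x U by apply: open_nbhs_nbhs; split.
move/nbhs_ballP: nU => [r r0 Hr].
near=> t; apply: Hr.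
rewrite -ball_normE /ball_ /= [`|_|]/Num.Def.normr /= mx_normrE.
apply: bigmax_lt => //= -[a b] _ /=.
rewrite (ord1 a) !mxE eqxx /= opprD addrA subrr sub0r normrN normrM.
have : `|t| < r by near: t; exact: (@nbhs0_lt R R r r0).
move=> tr; apply: le_lt_trans tr.
by rewrite ler_piMr // ; case: (b == m); rewrite ?normr1 ?normr0 ?ler01.
Unshelve. all: by end_near.
Qed.

Lemma LD_near (U : set pt) f g x m d :
  open U -> U x -> (forall y, U y -> f y = g y) ->
  is_derive (0:R) 1 (line f x m) d -> is_derive (0:R) 1 (line g x m) d.
Proof.
move=> oU Ux Hfg; apply: near_eq_is_derive.
have := near_line m oU Ux; apply: filter_app; near=> t => Ut.
by rewrite /line Hfg.
Unshelve. all: by end_near.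
Qed.

Lemma pd_near (U : set pt) f g x m :
  open U -> U x -> (forall y, U y -> f y = g y) -> pd m f x = pd m g x.
Proof.
move=> oU Ux Hfg; rewrite /pd !derive1E; apply: near_eq_derive.
have := near_line m oU Ux; apply: filter_app; near=> t => Ut.
by rewrite /line Hfg.
Unshelve. all: by end_near.
Qed.


Lemma ld_mul f g x m : ld m f x -> ld m g x -> ld m (fun y => f y * g y) x.
Proof.
move=> /ld_is_derive Hf /ld_is_derive Hg.
by have [] := is_derive_pd (LD_mul Hf Hg).
Qed.

Lemma ld_add f g x m : ld m f x -> ld m g x -> ld m (fun y => f y + g y) x.
Proof.
move=> /ld_is_derive Hf /ld_is_derive Hg.
by have [] := is_derive_pd (LD_add Hf Hg).
Qed.

Lemma ld_cst (c : R) x m : ld m (fun _ => c) x.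
Proof. by have [] := is_derive_pd (LD_cst c x m). Qed.

Lemma ld_ext f g x m : (forall y, f y = g y) -> ld m f x -> ld m g x.
Proof. by move=> /funext ->. Qed.

Lemma ld_inv f x m : ld m f x -> f x != 0 -> ld m (fun y => (f y)^-1) x.
Proof.
move=> Hf fx0.
rewrite /ld; have -> : line (fun y => (f y)^-1) x m = (fun t => (line f x m t)^-1) by [].
by apply: derivableV => //; rewrite lineE.
Qed.

Lemma ld_near (U : set pt) f g x m :
  open U -> U x -> (forall y, U y -> f y = g y) -> ld m f x -> ld m g x.
Proof.
move=> oU Ux Hfg /ld_is_derive H.
by have [] := is_derive_pd (LD_near oU Ux Hfg H).
Qed.

Lemma ld_big_sum (I : Type) (r : seq I) (P : pred I) (F : I -> pt -> R) x m :
  (forall i, P i -> ld m (F i) x) -> ld m (fun y => \sum_(i <- r | P i) F i y) x.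
Proof.
move=> H; elim: r => [|i r IH].
  by apply: (@ld_ext (fun _ => 0)) => [y|]; [rewrite big_nil | apply: ld_cst].
case Pi: (P i).
  apply: (@ld_ext (fun y => F i y + \sum_(j <- r | P j) F j y)).
    by move=> y; rewrite big_cons Pi.
  by apply: ld_add => //; apply: H.
apply: (@ld_ext (fun y => \sum_(j <- r | P j) F j y)) => //.
by move=> y; rewrite big_cons Pi.
Qed.

Lemma ld_big_prod (I : Type) (r : seq I) (P : pred I) (F : I -> pt -> R) x m :
  (forall i, P i -> ld m (F i) x) -> ld m (fun y => \prod_(i <- r | P i) F i y) x.
Proof.
move=> H; elim: r => [|i r IH].
  by apply: (@ld_ext (fun _ => 1)) => [y|]; [rewrite big_nil | apply: ld_cst].
case Pi: (P i).
  apply: (@ld_ext (fun y => F i y * \prod_(j <- r | P j) F j y)).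
    by move=> y; rewrite big_cons Pi.
  by apply: ld_mul => //; apply: H.
apply: (@ld_ext (fun y => \prod_(j <- r | P j) F j y)) => //.
by move=> y; rewrite big_cons Pi.
Qed.

Lemma ld_det n (M : pt -> 'M[R]_n) x m :
  (forall i j, ld m (fun y => M y i j) x) -> ld m (fun y => \det (M y)) x.
Proof.
move=> H; rewrite /determinant.
apply: ld_big_sum => s _; apply: ld_mul; first exact: ld_cst.
by apply: ld_big_prod => i _; apply: H.
Qed.

Lemma ld_invmx (U : set pt) (G : pt -> 'M[R]_D) x m :
  open U -> U x -> (forall y, U y -> G y \in unitmx) ->
  (forall i j, ld m (fun y => G y i j) x) ->
  forall a b, ld m (fun y => invmx (G y) a b) x.
Proof.
move=> oU Ux Hu H a b.
apply: (@ld_near U (fun y => (\det (G y))^-1 * cofactor (G y) b a)) => //.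
  by move=> y Uy; rewrite /invmx Hu // !mxE.
apply: ld_mul.
  apply: ld_inv; first exact: ld_det.
  by have := Hu _ Ux; rewrite unitmxE unitfE.
rewrite /cofactor; apply: ld_mul; first exact: ld_cst.
by apply: ld_det => i j; apply: (@ld_ext (fun y => G y (lift b i) (lift a j))) => // y; rewrite !mxE.
Qed.

End LD.

Section Bern.
Variable R : realType.
Variable k : nat.
Local Notation D := k.+2.
Local Notation pt := 'rV[R]_D.

Lemma pd_cst (c : R) (x : pt) m : pd m (fun _ => c) x = 0.
Proof. by have [] := is_derive_pd (LD_cst c x m). Qed.

Lemma stressE (g : pt -> 'M[R]_D) (n h P : pt -> R) (u : pt -> 'rV[R]_D) y a b :
  stress g n h P u y a b = n y * h y * (u y 0 a * u y 0 b) + P y * invmx (g y) a b.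
Proof. by rewrite /stress !mxE big_ord1 !mxE. Qed.

Lemma bernoulli_point (U : set pt) (g : pt -> 'M[R]_D) (n h P : pt -> R)
  (u : pt -> 'rV[R]_D) (x : pt) :
  open U -> U x ->
  (forall y, U y -> (g y)^T = g y) ->
  (forall y, U y -> g y \in unitmx) ->
  (forall a b m, ld m (fun z => g z a b) x) ->
  (forall m, ld m n x) -> (forall m, ld m h x) -> (forall m, ld m P x) ->
  (forall a m, ld m (fun z => u z 0 a) x) ->
  lie_met xi g x = 0 -> lie_fun xi P x = 0 ->
  div_vec g (fun y => n y *: u y) x = 0 ->
  (forall nu, div_tens g (stress g n h P u) nu x = 0) ->
  n x != 0 ->
  (\sum_(m < D) pd m h x * u x 0 m) * (\sum_(v < D) g x tau_i v * u x 0 v)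
  + h x * \sum_(v < D) ((\sum_(m < D) pd m (fun y => g y tau_i v) x * u x 0 m) * u x 0 v
                      + g x tau_i v * (\sum_(m < D) pd m (fun y => u y 0 v) x * u x 0 m)) = 0.
Proof.
move=> oU Ux Hsym Hunit Hg Hn Hh HP Hu Hkill HdP Hcont Heul Hn0.
have HGi : forall y, U y -> forall a b, invmx (g y) a b = invmx (g y) b a.
  move=> y Uy a b.
  by rewrite -[in RHS](Hsym y Uy) -trmx_inv mxE.
have Hinv : forall a b m, ld m (fun z => invmx (g z) a b) x.
  move=> a b m; apply: (ld_invmx oU Ux Hunit) => i j; exact: Hg.
apply: (@bernoulli_core R D tau_i (fun a b => g x a b) (fun a b => invmx (g x) a b)
   (fun m a b => pd m (fun y => g y a b) x) (fun m a b => pd m (fun y => invmx (g y) a b) x)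
   (fun a => u x 0 a) (fun m a => pd m (fun y => u y 0 a) x) (n x) (h x) (P x)
   (fun m => pd m n x) (fun m => pd m h x) (fun m => pd m P x)).
- by move=> a b /=; rewrite -[in LHS](Hsym x Ux) mxE.
- by move=> a b /=; apply: HGi.
- move=> m a b /=; apply: (pd_near m oU Ux) => y Uy.
  by rewrite -[in LHS](Hsym y Uy) mxE.
- move=> a b /=.
  have := Hunit x Ux => /mulmxV /(congr1 (fun M : 'M[R]_D => M a b)).
  by rewrite !mxE.
- move=> m a b /=.
  have H1 := LD_sum (fun c => LD_mul (ld_is_derive (Hinv a c m)) (ld_is_derive (Hg c b m))).
  have H2 : is_derive (0:R) 1 (line (fun y => \sum_(c < D) invmx (g y) a c * g y c b) x m) 0.
    apply: (LD_near oU Ux (f := fun _ => (a == b)%:R)); last exact: LD_cst.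
    move=> y Uy.
    have := Hunit y Uy => /mulVmx /(congr1 (fun M : 'M[R]_D => M a b)).
    by rewrite !mxE.
  have E := etrans (esym (@derive_val _ _ _ _ _ _ _ H1)) (@derive_val _ _ _ _ _ _ _ H2).
  by apply: etrans E; apply: eq_bigr => c _ /=; ring.
- move=> a b /=.
  have := congr1 (fun M : 'M[R]_D => M a b) Hkill; rewrite !mxE.
  have Hx : forall a c, pd a (fun y : pt => xi y 0 c) x = 0 := fun a c => pd_cst _ _ _.
  under eq_bigr do rewrite !Hx !mulr0 !addr0 /xi mxE /=.
  move=> H; rewrite -H; symmetry.
  by under eq_bigr do rewrite eq_sym; rewrite sum_delta.
- have := HdP; rewrite /lie_fun /xi.
  under eq_bigr do rewrite mxE /=.
  move=> H; rewrite -H; symmetry.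
  by under eq_bigr do rewrite eq_sym; rewrite sum_delta.
- by rewrite pnatr_eq0.
- move: Hcont; rewrite /div_vec => H; apply: (etrans _ H); congr (_ + _).
    apply: eq_bigr => m _.
    have -> : (fun y => (n y *: u y) 0 m) = (fun y => n y * u y 0 m).
      by apply/funext => y; rewrite mxE.
    have [_ ->] := is_derive_pd (LD_mul (ld_is_derive (Hn m)) (ld_is_derive (Hu m m))).
    by rewrite addrC [u x 0 m * _]mulrC.
  apply: eq_bigr => m _; apply: eq_bigr => l _; by rewrite mxE.
- move=> v; move: (Heul v); rewrite /div_tens => H; apply: (etrans _ H).
  congr (_ + _ + _).
  + apply: eq_bigr => m _.
    have -> : (fun y => stress g n h P u y m v) =
       (fun y => n y * h y * (u y 0 m * u y 0 v) + P y * invmx (g y) m v).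
      by apply/funext => y; rewrite stressE.
    have [_ ->] := is_derive_pd (LD_add
       (LD_mul (LD_mul (ld_is_derive (Hn m)) (ld_is_derive (Hh m)))
               (LD_mul (ld_is_derive (Hu m m)) (ld_is_derive (Hu v m))))
       (LD_mul (ld_is_derive (HP m)) (ld_is_derive (Hinv m v m)))).
    rewrite /dTm /=; ring.
  + by apply: eq_bigr => m _; apply: eq_bigr => l _; rewrite stressE.
  + by apply: eq_bigr => m _; apply: eq_bigr => l _; rewrite stressE.
- exact: Hn0.
Qed.

End Bern.

Section OneD.
Variable R : realType.
Implicit Types (f g : R -> R) (x : R).

Lemma D_mul f g x df dg : is_derive x 1 f df -> is_derive x 1 g dg ->
  is_derive x 1 (fun t => f t * g t) (f x * dg + g x * df).
Proof. move=> Hf Hg; have H := is_deriveM Hf Hg; exact: H. Qed.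

Lemma D_add f g x df dg : is_derive x 1 f df -> is_derive x 1 g dg ->
  is_derive x 1 (fun t => f t + g t) (df + dg).
Proof. move=> Hf Hg; have H := is_deriveD Hf Hg; exact: H. Qed.

Lemma D_opp f x df : is_derive x 1 f df -> is_derive x 1 (fun t => - f t) (- df).
Proof. move=> Hf; have H := is_deriveN Hf; exact: H. Qed.

Lemma D_cst (c : R) x : is_derive x 1 (fun _ : R => c) 0.
Proof. exact: is_derive_cst. Qed.

Lemma D_comp f g x df dg : is_derive x 1 f df -> is_derive (f x) 1 g dg ->
  is_derive x 1 (fun t => g (f t)) (dg * df).
Proof.
move=> [Hf1 Hf2] [Hg1 Hg2].
have Hc : derivable (g \o f) x 1.
  apply/derivable1_diffP; apply: differentiable_comp; exact/derivable1_diffP.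
apply: DeriveDef; first exact: Hc.
have := derive1_comp Hf1 Hg1; rewrite !derive1E Hf2 Hg2 => <-; by [].
Qed.

Lemma D_ext f g x d : (forall t, f t = g t) -> is_derive x 1 f d -> is_derive x 1 g d.
Proof. by move=> /funext ->. Qed.

Lemma D_uniq f x d1 d2 : is_derive x 1 f d1 -> is_derive x 1 f d2 -> d1 = d2.
Proof. by move=> [_ <-] [_ <-]. Qed.

Lemma D_derive1 f x d : is_derive x 1 f d -> derive1 f x = d.
Proof. by move=> [_ <-]; rewrite derive1E. Qed.

Lemma D_of_derivable f x : derivable f x 1 -> is_derive x 1 f (derive1 f x).
Proof. by move=> H; rewrite derive1E; apply: derivableP. Qed.

Lemma D_near (S : set R) f g x d : (\forall t \near x, S t) -> (forall t, S t -> f t = g t) ->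
  is_derive x 1 f d -> is_derive x 1 g d.
Proof.
move=> NS Hfg; apply: near_eq_is_derive.
by apply: filter_app NS; near=> t => St; rewrite Hfg.
Unshelve. all: by end_near.
Qed.

Lemma near_pos (y : R) : 0 < y -> \forall t \near y, 0 < t.
Proof. exact: lt_nbhsr. Qed.


Lemma D_eq f x d1 d2 : is_derive x 1 f d1 -> d1 = d2 -> is_derive x 1 f d2.
Proof. by move=> H <-. Qed.

Ltac gen_d := repeat match goal with |- context [derive1 ?f ?x] => generalize (derive1 f x); intro end.

Lemma lin0 (x y z : R) : x = 0 -> y = 0 -> z = x - y -> z = 0.
Proof. by move=> -> -> ->; rewrite subr0. Qed.

Lemma hess_le0 (Fss Fnn Fsn Ev Fn N1 N2 : R) :
  Ev = Fnn * N1 ^+ 2 + Fn * N2 + 2 * Fsn * N1 + Fss -> Ev = 0 -> Fn = 0 ->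
  Fss * Fnn - Fsn ^+ 2 <= 0.
Proof.
move=> HE E0 Fn0.
have -> : Fss = - (Fnn * N1 ^+ 2) - 2 * Fsn * N1.
  by apply/eqP; rewrite -subr_eq0; apply/eqP; rewrite -E0 HE Fn0; ring.
have -> : (- (Fnn * N1 ^+ 2) - 2 * Fsn * N1) * Fnn - Fsn ^+ 2 = - (Fsn + Fnn * N1) ^+ 2 by ring.
by rewrite oppr_le0 sqr_ge0.
Qed.

Lemma final1D (s1 s2 s0 np : R) (al be a c ta tc N : R -> R) :
  s0 \in `]s1, s2[ -> 0 < np -> N s0 = np ->
  (forall m, 0 < m -> derivable al m 1 /\ derivable be m 1) ->
  derivable (derive1 al) np 1 -> derivable (derive1 be) np 1 ->
  (forall t, t \in `]s1, s2[ -> a t = ta t /\ c t = tc t) ->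
  (forall t, t \in `]s1, s2[ ->
     derivable ta t 1 /\ derivable tc t 1 /\ derivable N t 1 /\ 0 < N t) ->
  derivable (derive1 ta) s0 1 -> derivable (derive1 tc) s0 1 -> derivable (derive1 N) s0 1 ->
  (forall t, t \in `]s1, s2[ ->
     is_derive t 1 (fun t => al (N t) * ta t + be (N t) * tc t) 0) ->
  derive1 al np * ta s0 + derive1 be np * tc s0 = 0 ->
  let F := fun sg m => al m * a sg + be m * c sg in
  dn F s0 np = 0 /\ dsig F s0 np = 0 /\ hessian_det F s0 np <= 0.
Proof.
move=> Is0 np0 Ns0 Hab Hal2 Hbe2 Hac Hder Hta2 Htc2 HN2 HPhi Hsonic F.
have nI : \forall t \near s0, t \in `]s1, s2[ by exact: near_in_itvoo.
have [Hal Hbe] := Hab _ np0.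
have [a0 c0] := Hac _ Is0.
have [Dta [Dtc [DN _]]] := Hder _ Is0.
pose E t := derive1 al (N t) * derive1 N t * ta t + al (N t) * derive1 ta t
          + (derive1 be (N t) * derive1 N t * tc t + be (N t) * derive1 tc t).
have E0 : forall t, t \in `]s1, s2[ -> E t = 0.
  move=> t It.
  have [Dta' [Dtc' [DN' Nt]]] := Hder _ It.
  have [Hal' Hbe'] := Hab _ Nt.
  have H1 := D_mul (D_comp (D_of_derivable DN') (D_of_derivable Hal')) (D_of_derivable Dta').
  have H2 := D_mul (D_comp (D_of_derivable DN') (D_of_derivable Hbe')) (D_of_derivable Dtc').
  have H3 := D_add H1 H2.
  rewrite -(D_uniq H3 (HPhi _ It)) /E; gen_d; ring.
have DE : is_derive s0 1 E 0.
  apply: (D_near nI (f := fun _ => 0)) => t It; by rewrite E0.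
have DN0 := D_of_derivable DN.
have DN1 := D_of_derivable HN2.
have Dta0 := D_of_derivable Dta.
have Dta1 := D_of_derivable Hta2.
have Dtc0 := D_of_derivable Dtc.
have Dtc1 := D_of_derivable Htc2.
have Hal1' := eq_ind_r (fun z => derivable al z 1) Hal Ns0.
have Hal2' := eq_ind_r (fun z => derivable (derive1 al) z 1) Hal2 Ns0.
have Hbe1' := eq_ind_r (fun z => derivable be z 1) Hbe Ns0.
have Hbe2' := eq_ind_r (fun z => derivable (derive1 be) z 1) Hbe2 Ns0.
have T := D_add (D_add (D_mul (D_mul (D_comp DN0 (D_of_derivable Hal2')) DN1) Dta0)
                       (D_mul (D_comp DN0 (D_of_derivable Hal1')) Dta1))
                (D_add (D_mul (D_mul (D_comp DN0 (D_of_derivable Hbe2')) DN1) Dtc0)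
                       (D_mul (D_comp DN0 (D_of_derivable Hbe1')) Dtc1)).
have Ezero := D_uniq T DE.
rewrite Ns0 in Ezero.
have dnE : forall sg, dn F sg np = (derive1 al np) * a sg + (derive1 be np) * c sg.
  move=> sg; rewrite /dn /F; apply: D_derive1.
  have H := D_add (D_mul (D_of_derivable Hal) (D_cst (a sg) np))
                  (D_mul (D_of_derivable Hbe) (D_cst (c sg) np)).
  apply: (D_eq H); gen_d; ring.
have dsigE : forall sg, sg \in `]s1, s2[ ->
    dsig F sg np = al np * derive1 ta sg + be np * derive1 tc sg.
  move=> sg Isg; rewrite /dsig /F; apply: D_derive1.
  have [Dta' [Dtc' _]] := Hder _ Isg.
  have H := D_add (D_mul (D_cst (al np) sg) (D_of_derivable Dta'))
                  (D_mul (D_cst (be np) sg) (D_of_derivable Dtc')).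
  have H' := D_eq H (_ : _ = al np * derive1 ta sg + be np * derive1 tc sg).
  apply: (D_near (near_in_itvoo Isg) _ (H' _)); last by gen_d; ring.
  by move=> t It /=; have [-> ->] := Hac _ It.
have Fs : dsig F s0 np = 0.
  rewrite dsigE //.
  have := E0 _ Is0; rewrite /E Ns0 => HE.
  have H2 : derive1 N s0 * ((derive1 al np) * ta s0 + (derive1 be np) * tc s0) = 0 by rewrite Hsonic mulr0.
  move: HE H2; set A := al np * derive1 ta s0 + be np * derive1 tc s0.
  move=> HE H2; apply: (lin0 HE H2); rewrite /A; gen_d; ring.
have dnE' : forall sg y, 0 < y -> dn F sg y = derive1 al y * a sg + derive1 be y * c sg.
  move=> sg y y0; rewrite /dn /F; apply: D_derive1.
  have [Hal' Hbe'] := Hab _ y0.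
  have H := D_add (D_mul (D_of_derivable Hal') (D_cst (a sg) y))
                  (D_mul (D_of_derivable Hbe') (D_cst (c sg) y)).
  apply: (D_eq H); gen_d; ring.
have Fss : derive1 (fun x => dsig F x np) s0 =
    al np * derive1 (derive1 ta) s0 + be np * derive1 (derive1 tc) s0.
  apply: D_derive1.
  have H := D_add (D_mul (D_cst (al np) s0) Dta1) (D_mul (D_cst (be np) s0) Dtc1).
  have H' := D_eq H (_ : _ = al np * derive1 (derive1 ta) s0 + be np * derive1 (derive1 tc) s0).
  apply: (D_near nI _ (H' _)); last by gen_d; ring.
  by move=> t It /=; rewrite dsigE.
have Fnn : derive1 (fun y => dn F s0 y) np = (derive1 (derive1 al) np) * ta s0 + (derive1 (derive1 be) np) * tc s0.
  apply: D_derive1.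
  have H := D_add (D_mul (D_of_derivable Hal2) (D_cst (a s0) np))
                  (D_mul (D_of_derivable Hbe2) (D_cst (c s0) np)).
  have H' := D_eq H (_ : _ = (derive1 (derive1 al) np) * ta s0 + (derive1 (derive1 be) np) * tc s0).
  apply: (D_near (near_pos np0) _ (H' _)); last by rewrite a0 c0; gen_d; ring.
  by move=> t t0 /=; rewrite dnE'.
have Fsn : derive1 (fun x => dn F x np) s0 = (derive1 al np) * derive1 ta s0 + (derive1 be np) * derive1 tc s0.
  apply: D_derive1.
  have H := D_add (D_mul (D_cst (derive1 al np) s0) Dta0) (D_mul (D_cst (derive1 be np) s0) Dtc0).
  have H' := D_eq H (_ : _ = (derive1 al np) * derive1 ta s0 + (derive1 be np) * derive1 tc s0).
  apply: (D_near nI _ (H' _)); last by gen_d; ring.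
  by move=> t It /=; rewrite dnE; have [-> ->] := Hac _ It.
split; first by rewrite dnE a0 c0 Hsonic.
split; first exact: Fs.
rewrite /hessian_det Fss Fnn Fsn.
apply: (@hess_le0 _ _ _ _ _ (derive1 N s0) (derive1 (derive1 N) s0) _ Ezero Hsonic).
gen_d; ring.
Qed.

End OneD.

Section Main.
Variable R : realType.
Variable k : nat.
Local Notation D := k.+2.
Local Notation pt := 'rV[R]_D.

Lemma gdot_evec (g : pt -> 'M[R]_D) x a b : gdot g x (evec a) (evec b) = g x a b.
Proof.
rewrite /gdot (bigD1 a) //= [X in _ + X]big1 ?addr0; last first.
  move=> i /negbTE Hi; rewrite big1 // => j _; by rewrite !mxE /= Hi mulr0 mul0r.
rewrite (bigD1 b) //= [X in _ + X]big1 ?addr0; last first.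
  by move=> j /negbTE Hj; rewrite !mxE /= Hj mulr0.
by rewrite !mxE /= !eqxx !mulr1.
Qed.

Lemma chain_C1 (U : set pt) (f : pt -> R) (gam : R -> pt) (t : R) (w : pt) :
  open U -> C1_on U f -> U (gam t) -> is_derive t 1 gam w ->
  is_derive t 1 (fun s => f (gam s)) (\sum_(m < D) pd m f (gam t) * w 0 m).
Proof.
move=> oU [_ HC] Ut Hg.
apply: (chain_rule oU Ut _ _ Hg).
- by move=> y Uy m; have [H1 _] := HC m; exact: H1.
- by move=> m; have [_ H2] := HC m.
Qed.

Lemma D_sum1 (n : nat) (F : 'I_n -> R -> R) (dF : 'I_n -> R) (x : R) :
  (forall i, is_derive x 1 (F i) (dF i)) ->
  is_derive x 1 (fun t => \sum_(i < n) F i t) (\sum_(i < n) dF i).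
Proof.
move=> H.
have -> : (fun t => \sum_(i < n) F i t) = \sum_(i < n) F i.
  by apply/funext => t; rewrite fct_sumE.
exact: is_derive_sum.
Qed.

Lemma C2_C1 (U : set pt) f : C2_on U f -> C1_on U f.
Proof. by case. Qed.

Lemma C2_pd (U : set pt) f m : C2_on U f -> C1_on U (pd m f).
Proof. by case=> _ H; apply: H. Qed.

Lemma C1_ld (U : set pt) f x m : C1_on U f -> U x -> ld m f x.
Proof. by move=> [_ H] Ux; have [H1 _] := H m; exact: H1. Qed.

Lemma det_minkowski : \det (@Defs.minkowski R k) = -1.
Proof.
rewrite /Defs.minkowski det_diag (bigD1 tau_i) //= big1 ?mulr1; first by rewrite mxE eqxx.
by move=> i /negbTE Hi; rewrite mxE Hi.
Qed.

Lemma lorentzian_unit (G : 'M[R]_D) : lorentzian G -> G \in unitmx.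
Proof.
move=> [_ [A [Au HA]]].
have := congr1 determinant HA; rewrite !det_mulmx det_tr det_minkowski => E.
rewrite unitmxE unitfE; apply/eqP => G0.
by move: E; rewrite G0 mulr0 mul0r => /eqP; rewrite eq_sym oppr_eq0 oner_eq0.
Qed.

Definition P2 (S : set R) (s0 : R) (f : R -> R) :=
  (forall t, S t -> derivable f t 1) /\ derivable (derive1 f) s0 1.

Lemma P2_ext (S : set R) s0 f g : (forall t, f t = g t) -> P2 S s0 f -> P2 S s0 g.
Proof. by move=> /funext ->. Qed.

Lemma P2_mul (S : set R) s0 f g : (\forall t \near s0, S t) -> S s0 ->
  P2 S s0 f -> P2 S s0 g -> P2 S s0 (fun t => f t * g t).
Proof.
move=> NS Ss0 [Hf1 Hf2] [Hg1 Hg2]; split.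
  by move=> t St; have [] := D_mul (D_of_derivable (Hf1 _ St)) (D_of_derivable (Hg1 _ St)).
have H := D_add (D_mul (D_of_derivable (Hf1 _ Ss0)) (D_of_derivable Hg2))
                (D_mul (D_of_derivable (Hg1 _ Ss0)) (D_of_derivable Hf2)).
have [] // := @D_near R S _ (derive1 (fun t => f t * g t)) s0 _ NS _ H.
move=> t St /=.
by rewrite (D_derive1 (D_mul (D_of_derivable (Hf1 _ St)) (D_of_derivable (Hg1 _ St)))).
Qed.

Lemma P2_opp (S : set R) s0 f : (\forall t \near s0, S t) -> S s0 ->
  P2 S s0 f -> P2 S s0 (fun t => - f t).
Proof.
move=> NS Ss0 [Hf1 Hf2]; split.
  by move=> t St; have [] := D_opp (D_of_derivable (Hf1 _ St)).
have H := D_opp (D_of_derivable Hf2).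
have [] // := @D_near R S _ (derive1 (fun t => - f t)) s0 _ NS _ H.
move=> t St /=.
by rewrite (D_derive1 (D_opp (D_of_derivable (Hf1 _ St)))).
Qed.

Lemma D_inv (y : R) : y != 0 -> is_derive y 1 (fun t : R => t^-1) (- (y ^+ 2)^-1).
Proof.
move=> y0; have := @is_deriveV R id y 1 1 y0 (is_derive_id _ _).
by move=> H; apply: (D_eq H); rewrite [_ *: _]mulr1.
Qed.

Lemma Pinv (y0 : R) : 0 < y0 -> P2 (fun y => 0 < y) y0 (fun t : R => t^-1).
Proof.
move=> y00; split.
  by move=> t t0; have [] := D_inv (lt0r_neq0 t0).
have H := D_opp (D_comp (D_mul (is_derive_id y0 1) (is_derive_id y0 1)) (D_inv (mulf_neq0 (lt0r_neq0 y00) (lt0r_neq0 y00)))).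
have [] // := @D_near R (fun y => 0 < y) _ (derive1 (fun t : R => t^-1)) y0 _ (near_pos y00) _ H.
move=> t t0 /=.
by rewrite (D_derive1 (D_inv (lt0r_neq0 t0))) expr2.
Qed.

End Main.

Unset Implicit Arguments.
Theorem theorem7 (R : realType) (k : nat) (U : set 'rV[R]_k.+2)
  (g : 'rV[R]_k.+2 -> 'M[R]_k.+2)
  (n h P s Temp v : 'rV[R]_k.+2 -> R) (u : 'rV[R]_k.+2 -> 'rV[R]_k.+2)
  (Hn : R -> R -> R) (gam : R -> 'rV[R]_k.+2) (sig1 sig2 sig0 : R) (p : 'rV[R]_k.+2)
  (* the chart domain and the metric *)
  (hU : open U)
  (hlor : forall x, U x -> lorentzian (g x))
  (hgC2 : forall a b, C2_on U (fun x => g x a b))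
  (* xi = d/dtau is a timelike Killing field; eta-bar = d/dlambda unit, spacelike, orthogonal *)
  (hKill : forall x, U x -> lie_met xi g x = 0)
  (htime : forall x, U x -> gdot g x (xi x) (xi x) < 0)
  (heta : forall x, U x -> gdot g x (etabar x) (etabar x) = 1 /\ gdot g x (xi x) (etabar x) = 0)
  (* the perfect fluid, of class C^2 *)
  (hpos : forall x, U x -> 0 < n x /\ 0 < h x /\ 0 < P x /\ 0 < s x /\ 0 < Temp x)
  (hC2 : C2_on U n /\ C2_on U h /\ C2_on U P /\ C2_on U s /\ C2_on U Temp /\ C2_on U v
         /\ forall a, C2_on U (fun x => u x 0 a))
  (hunorm : forall x, U x -> gdot g x (u x) (u x) = -1)
  (hthermo : forall x, U x -> forall a,
      pd a h x = Temp x * pd a s x + (n x)^-1 * pd a P x)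
  (hcont : forall x, U x -> div_vec g (fun y => n y *: u y) x = 0)
  (heuler : forall x, U x -> forall nu, div_tens g (stress g n h P u) nu x = 0)
  (hEOS : forall x, U x -> h x = Hn (n x) (s x))
  (hHn : forall s0, C2_on_R [set m | 0 < m] (fun m => Hn m s0))
  (hvs : forall x, U x -> 0 < sound2 Hn (n x) (s x) < 1)
  (* steadiness *)
  (hsteady : forall x, U x ->
      lie_fun xi P x = 0 /\ lie_fun xi s x = 0 /\ lie_vec xi u x = 0 /\ lie_vec xi etabar x = 0)
  (hv : forall x, U x -> 0 <= v x < 1)
  (hu : forall x, U x -> u x = (Num.sqrt (1 - v x ^+ 2))^-1 *:
          ((Num.sqrt `|gdot g x (xi x) (xi x)|)^-1 *: xi x + v x *: etabar x))
  (* the fluid world line through p, parametrized by proper time *)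
  (hsig : sig1 < sig0 < sig2)
  (hgamU : forall t, sig1 < t < sig2 -> U (gam t))
  (hgam : forall t, sig1 < t < sig2 -> is_derive t 1 gam (u (gam t)))
  (hp : gam sig0 = p)
  (hs_const : forall t, sig1 < t < sig2 -> s (gam t) = s p)
  (hmu_const : forall t, sig1 < t < sig2 -> mu_of g n u (gam t) = mu_of g n u p)
  (* p is a sonic point *)
  (hsonic : v p = Num.sqrt (sound2 Hn (n p) (s p))) :
  let F := Ffun g gam Hn (s p) (mu_of g n u p) in
  dn F sig0 (n p) = 0 /\ dsig F sig0 (n p) = 0 /\ hessian_det F sig0 (n p) <= 0.
Proof.
move=> F.
have Up : U p by rewrite -hp; apply: hgamU.
have [n0 [h0 [P0 [s0 T0]]]] := hpos p Up.
have [Cn [Ch [CP [Cs [CT [Cv Cu]]]]]] := hC2.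
pose H := fun m => Hn m (s p).
have hH : forall m, 0 < m -> derivable H m 1 /\ derivable (derive1 H) m 1.
  by move=> m m0; have [H1 _] := hHn (s p); apply: H1.
have tl : (tau_i : 'I_k.+2) != lam_i by [].
have gtt : forall x, U x -> g x tau_i tau_i < 0.
  by move=> x Ux; have := htime x Ux; rewrite /xi gdot_evec.
have gtl : forall x, U x -> g x tau_i lam_i = 0.
  by move=> x Ux; have [_] := heta x Ux; rewrite /xi /etabar gdot_evec.
pose cc := fun x => (Num.sqrt (1 - v x ^+ 2))^-1.
have uE : forall x, U x -> forall a, u x 0 a =
   cc x * ((Num.sqrt `|g x tau_i tau_i|)^-1 * (a == tau_i)%:R + v x * (a == lam_i)%:R).
  move=> x Ux a; rewrite (hu x Ux) /xi /etabar gdot_evec !mxE /=.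
  by [].
have ul : forall x, U x -> u x 0 lam_i = cc x * v x.
  by move=> x Ux; rewrite uE // eqxx eq_sym (negbTE tl) mulr0 add0r mulr1.
have Sx : forall x, U x -> \sum_(nu < k.+2) g x tau_i nu * u x 0 nu
      = cc x * ((Num.sqrt `|g x tau_i tau_i|)^-1 * g x tau_i tau_i).
  move=> x Ux.
  under eq_bigr => nu _ do rewrite (uE x Ux).
  set A := (Num.sqrt `|g x tau_i tau_i|)^-1.
  transitivity (\sum_(nu < k.+2) ((cc x * A) * (g x tau_i nu * (nu == tau_i)%:R)
                 + (cc x * v x) * (g x tau_i nu * (nu == lam_i)%:R))).
    by apply: eq_bigr => nu _; ring.
  rewrite big_split /= -!mulr_sumr !sum_delta' gtl // mulr0 addr0; ring.
have keyid : forall x, U x -> s x = s p ->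
  H (n x) * H (n x) * (- g x tau_i tau_i)
  + H (n x) * H (n x) * ((n x)^-1 * (n x)^-1) * (- g x tau_i tau_i * (n x * u x 0 lam_i) ^+ 2)
  = (h x * \sum_(nu < k.+2) g x tau_i nu * u x 0 nu) ^+ 2.
  move=> x Ux sx.
  rewrite Sx // ul // (hEOS x Ux) sx -/(H (n x)).
  have gA : g x tau_i tau_i = - (Num.sqrt `|g x tau_i tau_i|) ^+ 2.
    by rewrite sqr_sqrtr ?normr_ge0 // ltr0_norm ?gtt // opprK.
  have A0 : Num.sqrt `|g x tau_i tau_i| != 0.
    by rewrite sqrtr_eq0 -ltNge normr_gt0 lt_eqF ?gtt.
  move: gA A0; generalize (Num.sqrt `|g x tau_i tau_i|) => A gA A0.
  have nx0 : n x != 0 by have [+ _] := hpos x Ux; apply: lt0r_neq0.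
  have [v0 v1] : 0 <= v x /\ v x < 1 by apply/andP; apply: hv.
  have w0 : 0 < 1 - v x ^+ 2.
    by rewrite subr_gt0 expr2 (le_lt_trans (ler_piMl _ (ltW v1))) //.
  have e2 : cc x ^+ 2 * (1 - v x ^+ 2) = 1.
    by rewrite /cc exprVn sqr_sqrtr ?(ltW w0) // mulVf // gt_eqF.
  rewrite gA.
  apply/eqP; rewrite -subr_eq0; apply/eqP.
  transitivity (H (n x) * H (n x) * A ^+ 2 * (1 - cc x ^+ 2 * (1 - v x ^+ 2))).
    by field; rewrite A0 nx0.
  by rewrite e2 subrr mulr0.
pose Psi := fun t => h (gam t) * \sum_(nu < k.+2) g (gam t) tau_i nu * u (gam t) 0 nu.
have dPsi : forall t, sig1 < t < sig2 -> is_derive t 1 Psi 0.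
  move=> t It.
  have Ux := hgamU t It.
  have Hg' := hgam t It.
  have Dh := chain_C1 hU (C2_C1 Ch) Ux Hg'.
  have DS := D_sum1 (fun nu => D_mul (chain_C1 hU (C2_C1 (hgC2 tau_i nu)) Ux Hg')
                                     (chain_C1 hU (C2_C1 (Cu nu)) Ux Hg')).
  have DP := D_mul Dh DS.
  apply: (D_eq DP).
  have nx0 : n (gam t) != 0 by have [+ _] := hpos _ Ux; apply: lt0r_neq0.
  have B := bernoulli_point hU Ux (fun y Uy => (hlor y Uy).1)
    (fun y Uy => lorentzian_unit (hlor y Uy))
    (fun a b m => C1_ld (m := m) (C2_C1 (hgC2 a b)) Ux)
    (fun m => C1_ld (m := m) (C2_C1 Cn) Ux) (fun m => C1_ld (m := m) (C2_C1 Ch) Ux)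
    (fun m => C1_ld (m := m) (C2_C1 CP) Ux) (fun a m => C1_ld (m := m) (C2_C1 (Cu a)) Ux)
    (hKill _ Ux) ((hsteady _ Ux).1) (hcont _ Ux) (heuler _ Ux) nx0.
  apply: (etrans _ B).
  rewrite addrC mulrC; congr (_ + _); congr (_ * _).
  by apply: eq_bigr => nu _; rewrite addrC mulrC.
pose I := fun t : R => t \in `]sig1, sig2[.
have Iiff : forall t, I t -> sig1 < t < sig2 by move=> t; rewrite /I in_itv.
have Is0 : I sig0 by rewrite /I in_itv.
have NI : \forall t \near sig0, I t by exact: near_in_itvoo.
have U0 : U (gam sig0) := hgamU _ hsig.
have P2gam : forall X, C2_on U X -> P2 I sig0 (fun t => X (gam t)).
  move=> X CX; split.
    by move=> t /Iiff It; have [] := chain_C1 hU (C2_C1 CX) (hgamU _ It) (hgam _ It).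
  have H0 := D_sum1 (fun m => D_mul (chain_C1 hU (C2_pd m CX) U0 (hgam _ hsig))
                                   (chain_C1 hU (C2_C1 (Cu m)) U0 (hgam _ hsig))).
  have [] // := @D_near R I _ (derive1 (fun t => X (gam t))) sig0 _ NI _ H0.
  move=> t /Iiff It /=.
  by rewrite (D_derive1 (chain_C1 hU (C2_C1 CX) (hgamU _ It) (hgam _ It))).
pose N := fun t => n (gam t).
pose ta := fun t => - g (gam t) tau_i tau_i.
pose tc := fun t => - g (gam t) tau_i tau_i * (n (gam t) * u (gam t) 0 lam_i) ^+ 2.
have PN : P2 I sig0 N := P2gam _ Cn.
have Pta : P2 I sig0 ta := P2_opp NI Is0 (P2gam _ (hgC2 tau_i tau_i)).
have PUl := P2gam _ (Cu lam_i).
have Ptc : P2 I sig0 tc.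
  apply: P2_ext (P2_mul NI Is0 Pta (P2_mul NI Is0 (P2_mul NI Is0 PN PUl) (P2_mul NI Is0 PN PUl))).
  by move=> t; rewrite /tc expr2.
have NP : \forall y \near n p, 0 < y := near_pos n0.
have PH : P2 (fun y => 0 < y) (n p) H.
  split; first by move=> t t0; have [] := hH t t0.
  by have [] := hH _ n0.
pose al := fun m => H m * H m.
pose be := fun m => H m * H m * (m^-1 * m^-1).
have Pal : P2 (fun y => 0 < y) (n p) al := P2_mul NP n0 PH PH.
have Pbe : P2 (fun y => 0 < y) (n p) be := P2_mul NP n0 Pal (P2_mul NP n0 (Pinv n0) (Pinv n0)).
pose mu := mu_of g n u p.
pose a := fun sg => `|g (gam sg) tau_i tau_i|.
pose c := fun sg => `|g (gam sg) tau_i tau_i| * (mu / Num.sqrt `|\det (g (gam sg))|) ^+ 2.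
have FE : F = (fun sg m => al m * a sg + be m * c sg).
  apply/funext => sg; apply/funext => m.
  rewrite /F /Ffun /al /be /a /c /mu /H invfM; ring.
have detn0 : forall x, U x -> Num.sqrt `|\det (g x)| != 0.
  move=> x Ux; rewrite sqrtr_eq0 -ltNge normr_gt0.
  by have := lorentzian_unit (hlor x Ux); rewrite unitmxE unitfE.
have Hac : forall t, I t -> a t = ta t /\ c t = tc t.
  move=> t /Iiff It; have Ut := hgamU t It.
  rewrite /a /c /ta /tc ltr0_norm ?gtt //; split => //.
  congr (_ * _ ^+ 2).
  rewrite /mu -(hmu_const t It) /mu_of.
  by field; rewrite detn0.
have Hder : forall t, I t ->
    derivable ta t 1 /\ derivable tc t 1 /\ derivable N t 1 /\ 0 < N t.
  move=> t It; have It' := Iiff _ It.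
  split; first exact: Pta.1.
  split; first exact: Ptc.1.
  split; first exact: PN.1.
  by have [] := hpos _ (hgamU t It').
have HPhi : forall t, I t ->
    is_derive t 1 (fun t => al (N t) * ta t + be (N t) * tc t) 0.
  move=> t It; have It' := Iiff _ It.
  have DP2 := D_mul (dPsi t It') (dPsi t It').
  apply: (@D_near R I (fun s => Psi s * Psi s) _ t 0 (near_in_itvoo It)).
    move=> s0' Is; have Is' := Iiff _ Is.
    rewrite -expr2 /Psi -(keyid _ (hgamU _ Is') (hs_const _ Is')).
    by [].
  by apply: (D_eq DP2); rewrite mulr0 addr0.
have e2all : forall x, U x -> cc x ^+ 2 * (1 - v x ^+ 2) = 1.
  move=> x Ux.
  have [v0 v1] : 0 <= v x /\ v x < 1 by apply/andP; apply: hv.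
  have w0 : 0 < 1 - v x ^+ 2.
    by rewrite subr_gt0 expr2 (le_lt_trans (ler_piMl _ (ltW v1))) //.
  by rewrite /cc exprVn sqr_sqrtr ?(ltW w0) // mulVf // gt_eqF.
have DH := D_of_derivable (hH _ n0).1.
have np0 : n p != 0 := lt0r_neq0 n0.
have dal : derive1 al (n p) = H (n p) * derive1 H (n p) + H (n p) * derive1 H (n p).
  exact: (D_derive1 (D_mul DH DH)).
have dbe := D_derive1 (D_mul (D_mul DH DH) (D_mul (D_inv np0) (D_inv np0))).
have Hm0 : H (n p) != 0.
  have -> : H (n p) = h p by rewrite /H hEOS.
  exact: lt0r_neq0.
have q2 : v p ^+ 2 = n p * derive1 H (n p) / H (n p).
  have /andP [sv0 _] := hvs p Up.
  by rewrite hsonic sqr_sqrtr ?(ltW sv0) // /sound2 /H.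
have Hsonic : derive1 al (n p) * ta sig0 + derive1 be (n p) * tc sig0 = 0.
  have e2p := e2all p Up; rewrite q2 in e2p.
  rewrite dal dbe /ta /tc hp (ul p Up) !exprMn q2.
  move: e2p; generalize (derive1 H (n p)) (cc p) => d1 cp e2p.
  transitivity (- g p tau_i tau_i * 2 * d1 * H (n p) * (1 - cp ^+ 2 * (1 - n p * d1 / H (n p)))).
    by field; rewrite Hm0 np0.
  by rewrite e2p subrr mulr0.
have Ns0 : N sig0 = n p by rewrite /N hp.
have Hab : forall m, 0 < m -> derivable al m 1 /\ derivable be m 1.
  by move=> m m0; split; [apply: Pal.1 | apply: Pbe.1].
rewrite FE.
exact: (final1D (al:=al) (be:=be) (a:=a) (c:=c) (ta:=ta) (tc:=tc) (N:=N)
   Is0 n0 Ns0 Hab Pal.2 Pbe.2 Hac Hder Pta.2 Ptc.2 PN.2 HPhi Hsonic).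
Qed.
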